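(* Let $n\ge 3$ and $m\ge 3$, let $C_n$ be a cycle on $n$ vertices and $P_m$ a path on $m$ vertices, and let $H$ be the graph obtained by identifying one vertex of $C_n$ with an endpoint of $P_m$ (a $1$-clique sum of $C_n$ and $P_m$). Then $$v(C_n)+v(P_{m-2})-1\le v(H)\le v(C_n)+v(P_{m-2}).$$
   Context: Let $K$ be a field and $S$ a standard graded polynomial ring over $K$. For a proper graded ideal $I\subset S$, the $v$-number is $v(I)=\min\{k\ge 0 : \exists f\in S_k,\ \mathcal P\in\operatorname{Ass}(S/I) \text{ with } (I:f)=\mathcal P\}$. For a finite simple graph $G$ whose vertices are variables of a polynomial ring, $I(G)$ is the edge ideal generated by $x_ix_j$ over edges $\{x_i,x_j\}$, and $v(G):=v(I(G))$. $P_k$ denotes the path on $k$ vertices (vertices $y_1,\dots,y_k$, edges $\{y_i,y_{i+1}\}$) and $C_n$ the cycle on $n$ vertices. A $1$-clique sum of graphs $G_1,G_2$ is $G_1\cup G_2$ where $G_1\cap G_2$ is a single vertex and neither $G_i$ is a single vertex. *)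

(* Defs.v *)
From HB Require Import structures.
From mathcomp Require Import all_boot all_algebra.
From mathcomp Require Import mpoly.
Set Implicit Arguments. Unset Strict Implicit. Unset Printing Implicit Defensive.
Import GRing.Theory.
Local Open Scope ring_scope.

(* Ideals of S = K[x_0, ..., x_(N-1)] (standard grading, mdeg) are represented
   as predicates (subsets) on {mpoly K[N]}. *)
Section VNumber.
Variables (K : fieldType) (N : nat).
Local Notation S := {mpoly K[N]}.

Definition is_ideal (I : S -> Prop) : Prop :=
  I 0 /\ (forall a b, I a -> I b -> I (a + b)) /\ (forall r a, I a -> I (r * a)).

Definition ideal_gen (gens : seq S) : S -> Prop :=
  fun f => exists c : nat -> S, f = \sum_(i < size gens) c i * gens`_i.

Definition colon (I : S -> Prop) (f : S) : S -> Prop := fun g => I (g * f).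

Definition prime_ideal (P : S -> Prop) : Prop :=
  is_ideal P /\ ~ P 1 /\ (forall a b, P (a * b) -> P a \/ P b).

Definition same_ideal (I J : S -> Prop) : Prop := forall g, I g <-> J g.

(* Ass(S/I): primes that are annihilators (I : g) of elements g + I of S/I *)
Definition Ass (I : S -> Prop) (P : S -> Prop) : Prop :=
  prime_ideal P /\ exists g : S, same_ideal (colon I g) P.

Definition vnum_witness (I : S -> Prop) (k : nat) : Prop :=
  exists f : S, f \is k.-homog /\
    exists P, Ass I P /\ same_ideal (colon I f) P.

Definition is_vnumber (I : S -> Prop) (k : nat) : Prop :=
  vnum_witness I k /\ forall j, vnum_witness I j -> (k <= j)%N.

Definition edge_ideal (e : rel 'I_N) : S -> Prop :=
  ideal_gen [seq 'X_(p.1) * 'X_(p.2) | p <- enum [pred p : 'I_N * 'I_N | e p.1 p.2]].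

Definition is_vnumber_graph (e : rel 'I_N) (k : nat) : Prop :=
  is_vnumber (edge_ideal e) k.

End VNumber.
Local Close Scope ring_scope.
Local Open Scope nat_scope.

Definition cycle_rel (n : nat) : rel 'I_n :=
  fun i j => (val j == ((val i).+1 %% n)%N) || (val i == (val j).+1 %% n).

Definition path_rel (k : nat) : rel 'I_k :=
  fun i j => (val j == (val i).+1) || (val i == (val j).+1).

(* H: C_n on vertices 0..n-1; P_m = y_1 ... y_m with y_1 identified with
   vertex 0 of C_n and y_(t+2) being vertex n+t (t = 0..m-2). *)
Definition clique_sum_base (n m : nat) (i j : 'I_(n + m - 1)) : bool :=
  [&& (val i < n)%N, (val j < n)%N & val j == ((val i).+1 %% n)%N]
  || ((val i == 0%N) && (val j == n :> nat))
  || ((n <= val i)%N && (val j == (val i).+1)).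

Definition cycle_path_rel (n m : nat) : rel 'I_(n + m - 1) :=
  fun i j => @clique_sum_base n m i j || @clique_sum_base n m j i.

Arguments cycle_rel n : clear implicits.
Arguments path_rel k : clear implicits.
Arguments cycle_path_rel n m : clear implicits.

(* Main.v *)
Require Import Defs.
From mathcomp Require Import all_boot all_algebra.
From mathcomp Require Import mpoly.
From mathcomp Require Import ring zify.
From Stdlib Require Import Classical.
Set Implicit Arguments. Unset Strict Implicit. Unset Printing Implicit Defensive.
Import GRing.Theory.

Local Open Scope ring_scope.

Section Alg.
Variables (K : fieldType) (N : nat) (e : rel 'I_N).
Local Notation S := {mpoly K[N]}.

Definition cov (m : 'X_{1..N}) : bool :=
  [exists i, exists j, [&& e i j, (0 < m i)%N & (0 < m j)%N]].
Definition monI (g : S) : bool := all cov (msupp g).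

Lemma cov_mono m w : cov m -> cov (m + w)%MM.
Proof.
case/existsP=> i /existsP [j /and3P [eij mi mj]].
apply/existsP; exists i; apply/existsP; exists j.
by rewrite eij !mnmDE (leq_trans mi (leq_addr _ _)) (leq_trans mj (leq_addr _ _)).
Qed.

Lemma monI0 : monI 0.
Proof. by rewrite /monI msupp0. Qed.

Lemma monID p q : monI p -> monI q -> monI (p + q).
Proof.
move=> /allP hp /allP hq; apply/allP=> m /msuppD_le; rewrite mem_cat.
by case/orP=> [/hp|/hq].
Qed.

Lemma monIN p : monI p -> monI (- p).
Proof. by move=> /allP hp; apply/allP=> m; rewrite (perm_mem (msuppN _)) => /hp. Qed.

Lemma monIM p q : monI q -> monI (p * q).
Proof.
move=> /allP hq; apply/allP=> m /msuppM_le /allpairsP [[m1 m2] /= [_ h2 ->]].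
by rewrite addmC; apply: cov_mono; apply: hq.
Qed.

Lemma monIMr p q : monI p -> monI (p * q).
Proof. by move=> h; rewrite mulrC; apply: monIM. Qed.

Lemma monI_sum (I : Type) (r : seq I) (F : I -> S) :
  (forall i, monI (F i)) -> monI (\sum_(i <- r) F i).
Proof.
move=> h; elim: r => [|x r ih]; first by rewrite big_nil monI0.
by rewrite big_cons monID.
Qed.

Definition gens : seq S :=
  [seq 'X_(p.1) * 'X_(p.2) | p <- enum [pred p : 'I_N * 'I_N | e p.1 p.2]].

Lemma ideal_gen_is_ideal (gs : seq S) : is_ideal (ideal_gen gs).
Proof.
split; first by exists (fun _ => 0); rewrite big1 // => i _; rewrite mul0r.
split.
  move=> a b [ca ->] [cb ->]; exists (fun i => ca i + cb i).
  by rewrite -big_split /=; apply: eq_bigr => i _; rewrite mulrDl.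
move=> r a [ca ->]; exists (fun i => r * ca i).
by rewrite mulr_sumr; apply: eq_bigr => i _; rewrite mulrA.
Qed.

Lemma ideal_gen_mem (gs : seq S) g : g \in gs -> ideal_gen gs g.
Proof.
move=> gin; exists (fun i => if i == index g gs then 1 else 0).
have ilt : (index g gs < size gs)%N by rewrite index_mem.
rewrite (bigD1 (Ordinal ilt)) //= eqxx mul1r nth_index // big1 ?addr0 //.
move=> i /eqP ne; case: eqP => [h|_]; last by rewrite mul0r.
by case: ne; apply: val_inj.
Qed.

Lemma ideal_gen_sum (gs : seq S) (I : Type) (r : seq I) (F : I -> S) :
  (forall i, ideal_gen gs (F i)) -> ideal_gen gs (\sum_(i <- r) F i).
Proof.
have [h0 [hD hM]] := ideal_gen_is_ideal gs.
move=> h; elim: r => [|x r ih]; first by rewrite big_nil.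
by rewrite big_cons; apply: hD.
Qed.

Hypothesis eirr : irreflexive e.

Lemma gen_monI g : g \in gens -> monI g.
Proof.
case/mapP=> [[a b]]; rewrite mem_enum inE /= => eab ->.
rewrite -mpolyXD /monI msuppX /= andbT; apply/existsP; exists a; apply/existsP; exists b.
rewrite eab !mnmDE !mnm1E !eqxx /=; by case: (b == a); case: (a == b).
Qed.

Lemma edge_idealP g : edge_ideal e g <-> monI g.
Proof.
split.
  case=> c ->; apply: monI_sum => i; apply: monIM.
  by apply: gen_monI; apply: mem_nth.
move=> /allP hg; rewrite [g]mpolyE; apply: ideal_gen_sum => m.
have [h0 [hD hM]] := ideal_gen_is_ideal gens.
case: (boolP (m \in msupp g)) => [/hg|/memN_msupp_eq0 ->]; last by rewrite scale0r.
case/existsP=> i /existsP [j /and3P [eij mi mj]].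
have nij : i != j by apply: contraTneq eij => ->; rewrite eirr.
have le : (U_(i) + U_(j) <= m)%MM.
  apply/mnm_lepP => k; rewrite mnmDE !mnm1E.
  case: (i =P k) => [ik|ik]; case: (j =P k) => [jk|jk] //=.
  - by subst; rewrite eqxx in nij.
  - by subst; rewrite add1n.
  - by subst; rewrite add0n.
rewrite -(submK le) mpolyXD mpolyXD scalerAl.
apply: hM; apply: ideal_gen_mem; apply/mapP; exists (i, j) => //.
by rewrite mem_enum.
Qed.
End Alg.

Local Close Scope ring_scope.

Local Open Scope ring_scope.

Section Split.
Variables (K : fieldType) (N : nat).
Local Notation S := {mpoly K[N]}.

Definition msplit (Q : pred 'X_{1..N}) (p : S) : S :=
  \sum_(m <- msupp p | Q m) p@_m *: 'X_[m].

Lemma msplit_supp Q p m : m \in msupp (msplit Q p) -> Q m && (m \in msupp p).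
Proof.
move/msupp_sum_le => /flattenP [s /mapP [m' hm' ->]].
move=> /msuppZ_le; rewrite msuppX mem_seq1 => /eqP ->.
by move: hm'; rewrite mem_filter andbC.
Qed.

Lemma msplitE Q p : p = msplit Q p + msplit (predC Q) p.
Proof. by rewrite {1}[p]mpolyE (bigID Q) /=. Qed.

Definition meets (C : pred 'I_N) (m : 'X_{1..N}) := [exists i, C i && (0 < m i)%N].
Definition monP (C : pred 'I_N) (g : S) : Prop := all (meets C) (msupp g).

Lemma meetsD C m w : meets C (m + w)%MM = meets C m || meets C w.
Proof.
apply/existsP/orP => [[i /andP [ci]]|].
  rewrite mnmDE addn_gt0 => /orP [h|h]; [left|right]; apply/existsP; exists i; by rewrite ci.
case=> /existsP [i /andP [ci h]]; exists i; by rewrite ci mnmDE addn_gt0 h //= orbT.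
Qed.

Lemma monP_prime C : prime_ideal (monP C).
Proof.
have hD : forall a b, monP C a -> monP C b -> monP C (a + b).
  move=> a b /allP ha /allP hb; apply/allP=> m /msuppD_le; rewrite mem_cat.
  by case/orP=> [/ha|/hb].
have hM : forall r a, monP C a -> monP C (r * a).
  move=> r a /allP ha; apply/allP=> m /msuppM_le /allpairsP [[m1 m2] /= [_ h2 ->]].
  by rewrite meetsD (ha _ h2) orbT.
have hN : forall a, monP C a -> monP C (- a).
  by move=> a /allP ha; apply/allP=> m; rewrite (perm_mem (msuppN _)) => /ha.
split; first by split; [rewrite /monP msupp0|split].
split; first by rewrite /monP msupp1 /= andbT /meets => /existsP [i]; rewrite mnm0E andbF.
move=> a b hab.
rewrite /monP; case: (boolP (all (meets C) (msupp a))) => [ha|na]; first by left.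
case: (boolP (all (meets C) (msupp b))) => [hb|nb]; first by right.
exfalso.
pose Q := predC (meets C).
have hsplit1 : forall p, monP C (msplit (predC Q) p).
  move=> p; apply/allP => m /msplit_supp /andP [] /=; by rewrite negbK.
have nz : forall p, ~~ all (meets C) (msupp p) -> msplit Q p != 0.
  move=> p np; apply/eqP => h; move: np; rewrite [p](msplitE Q) h add0r.
  by move: (hsplit1 p); rewrite /monP => ->.
set a0 := msplit Q a; set b0 := msplit Q b.
have e1 : a0 * b0 = a * b - (a0 * msplit (predC Q) b + b * msplit (predC Q) a).
  have ea : a = a0 + msplit (predC Q) a by apply: msplitE.
  have eb : b = b0 + msplit (predC Q) b by apply: msplitE.
  set x := msplit _ a; set y := msplit _ b.
  have -> : a * b = (a0 + x) * (b0 + y) by rewrite -ea -eb.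
  rewrite eb -/y; ring.
have : monP C (a0 * b0).
  rewrite e1; apply: (hD) => //; apply: (hN); apply: (hD); apply: (hM); exact: hsplit1.
have : a0 * b0 != 0 by rewrite mulf_neq0 // nz.
rewrite -msupp_eq0; case E: (msupp _) => [|m s] // _ /allP /(_ m).
rewrite E inE eqxx => /(_ isT).
have : m \in msupp (a0 * b0) by rewrite E inE eqxx.
move/msuppM_le/allpairsP => [[m1 m2] /= [/msplit_supp /andP [h1 _] /msplit_supp /andP [h2 _] ->]].
by rewrite meetsD (negbTE h1) (negbTE h2).
Qed.
End Split.

Local Close Scope ring_scope.

Local Open Scope ring_scope.

Section Upper.
Variables (K : fieldType) (N : nat) (e : rel 'I_N).
Hypothesis eirr : irreflexive e.
Hypothesis esym : forall i j, e i j = e j i.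
Local Notation S := {mpoly K[N]}.

Definition indep (A : {set 'I_N}) :=
  [forall i, forall j, (i \in A) && (j \in A) ==> ~~ e i j].
Definition nbhd (A : {set 'I_N}) := [set j | [exists a, (a \in A) && e a j]].
Definition good (A : {set 'I_N}) :=
  indep A && [forall i, forall j, e i j ==> (i \in nbhd A) || (j \in nbhd A)].

Lemma colonX u (g : S) :
  edge_ideal e (g * 'X_[u]) <-> all (fun m => cov e (m + u)%MM) (msupp g).
Proof.
rewrite edge_idealP // /monI (perm_all _ (msuppMX _ _)) all_map.
by split => /allP h; apply/allP => m /h /=; rewrite addmC.
Qed.

Definition mA (A : {set 'I_N}) : 'X_{1..N} := [multinom (i \in A : nat) | i < N].

Lemma mdeg_mA A : mdeg (mA A) = #|A|.
Proof.
rewrite mdegE -sum1_card [RHS]big_mkcond /=; apply: eq_bigr => i _.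
by rewrite mnmE; case: (i \in A).
Qed.

Lemma cov_mA A m : good A ->
  cov e (m + mA A)%MM = meets (fun i => i \in nbhd A) m.
Proof.
case/andP => /forallP hind /forallP hcov.
apply/idP/idP.
  case/existsP=> i /existsP [j /and3P [eij]]; rewrite !mnmDE !mnmE.
  case iA: (i \in A); case jA: (j \in A) => /= hi hj.
  - by move: (hind i) => /forallP /(_ j); rewrite iA jA eij.
  - apply/existsP; exists j; rewrite -addn1 addn0 in hj; rewrite hj andbT inE.
    by apply/existsP; exists i; rewrite iA.
  - apply/existsP; exists i; rewrite addn0 in hi; rewrite hi andbT inE.
    by apply/existsP; exists j; rewrite jA esym.
  - rewrite addn0 in hi; rewrite addn0 in hj.
    move: (hcov i) => /forallP /(_ j); rewrite eij /= => /orP [h|h];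
      apply/existsP; [exists i|exists j]; by rewrite h.
case/existsP=> k /andP []; rewrite inE => /existsP [a /andP [aA eak]] mk.
apply/existsP; exists a; apply/existsP; exists k; rewrite eak !mnmDE !mnmE aA /=.
by rewrite addn1 /= (leq_trans mk (leq_addr _ _)).
Qed.

Lemma good_witness A : good A -> vnum_witness (@edge_ideal K N e) #|A|.
Proof.
move=> gA; exists 'X_[mA A]; split; first by rewrite dhomogE msuppX /= andbT mdeg_mA.
have hc : same_ideal (colon (@edge_ideal K N e) (@mpolyX N K (mA A))) (monP (fun i => i \in nbhd A)).
  move=> g; rewrite /colon colonX /monP.
  by split => /allP h; apply/allP => m /h; rewrite cov_mA.
exists (monP (fun i => i \in nbhd A)); split => //; split; last by exists 'X_[mA A].
exact: monP_prime.
Qed.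
End Upper.

Local Close Scope ring_scope.

Local Open Scope ring_scope.

Section Lower.
Variables (K : fieldType) (N : nat) (e : rel 'I_N).
Hypothesis eirr : irreflexive e.
Hypothesis esym : forall i j, e i j = e j i.
Local Notation S := {mpoly K[N]}.

Lemma cov_le m m' : (m <= m')%MM -> cov e m -> cov e m'.
Proof.
move=> /mnm_lepP le /existsP [i /existsP [j /and3P [eij mi mj]]].
apply/existsP; exists i; apply/existsP; exists j.
by rewrite eij (leq_trans mi (le i)) (leq_trans mj (le j)).
Qed.

Lemma prime_prod (P : S -> Prop) (I : Type) (r : seq I) (F : I -> S) :
  prime_ideal P -> P (\prod_(i <- r) F i) -> exists i, P (F i).
Proof.
move=> [_ [n1 hp]]; elim: r => [|x r ih]; first by rewrite big_nil.
rewrite big_cons => /hp [h|/ih //]; by exists x.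
Qed.

Lemma prime_exp (P : S -> Prop) (x : S) k :
  prime_ideal P -> P (x ^+ k) -> P x /\ (0 < k)%N.
Proof.
move=> [_ [n1 hp]]; elim: k => [|k ih]; first by rewrite expr0.
rewrite exprS => /hp [h|/ih [] //]; by [].
Qed.

Lemma prime_X (P : S -> Prop) w :
  prime_ideal P -> P 'X_[w] -> exists i, P 'X_i /\ (0 < w i)%N.
Proof.
move=> hP; rewrite mpolyXE_id => /(prime_prod hP) [i] /(prime_exp hP) [h1 h2].
by exists i.
Qed.

Lemma combine_w (Pv : 'I_N -> Prop) (s : seq 'X_{1..N}) :
  (forall u, u \in s -> exists w, cov e (w + u)%MM /\ forall i, Pv i -> w i = 0%N) ->
  exists w : 'X_{1..N}, (forall i, Pv i -> w i = 0%N) /\ forall u, u \in s -> cov e (w + u)%MM.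
Proof.
elim: s => [|x s ih] h.
  by exists 0%MM; split => // i _; rewrite mnm0E.
have [w1 [c1 a1]] := h x (mem_head _ _).
have [|w2 [a2 c2]] := ih; first by move=> u us; apply: h; rewrite inE us orbT.
exists (w1 + w2)%MM; split; first by move=> i pi; rewrite mnmDE a1 // a2.
move=> u; rewrite inE => /orP [/eqP ->|us].
  apply: cov_le c1; apply/mnm_lepP => i; rewrite !mnmDE; lia.
apply: cov_le (c2 _ us); apply/mnm_lepP => i; rewrite !mnmDE; lia.
Qed.

Lemma witness_good k : vnum_witness (@edge_ideal K N e) k ->
  exists A, good e A && (#|A| <= k)%N.
Proof.
move=> [f [hf [P [[hP _] hfP]]]].
have [hI [n1 hpr]] := hP.
pose f1 := msplit (predC (cov e)) f; pose f2 := msplit (cov e) f.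
have ef : f = f2 + f1 by apply: msplitE.
have mf2 : monI e f2.
  by apply/allP => m /msplit_supp /andP [].
have eq1 : forall h, monI e (h * f) <-> monI e (h * f1).
  move=> h; rewrite ef mulrDr; split => H.
    have -> : h * f1 = (h * f2 + h * f1) - h * f2 by ring.
    by apply: monID => //; apply: monIN; apply: monIM.
  by apply: monID => //; apply: monIM.
have hP1 : forall h, monI e (h * f1) <-> P h.
  move=> h; rewrite -eq1 -(edge_idealP eirr); exact: hfP.
have hC : forall i, P 'X_i -> forall u, u \in msupp f1 -> cov e (U_(i) + u)%MM.
  move=> i /hP1; rewrite mulrC /monI (perm_all _ (msuppMX _ _)) all_map.
  by move=> /allP h u /h.
have [u uf1 hu] : exists2 u, u \in msupp f1 &
    forall w : 'X_{1..N}, cov e (w + u)%MM -> exists i, P 'X_i /\ (0 < w i)%N.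
  apply: NNPP => H.
  have H' : forall u, u \in msupp f1 -> exists w : 'X_{1..N}, cov e (w + u)%MM /\
      forall i, P 'X_i -> w i = 0%N.
    move=> u hu; apply: NNPP => H2; apply: H; exists u => // w hw.
    apply: NNPP => H3; apply: H2; exists w; split => // i Pi.
    apply/eqP; rewrite -leqn0 leqNgt; apply/negP => pos; apply: H3; by exists i.
  have [w [aw cw]] := combine_w H'.
  have : P 'X_[w].
    apply/hP1; rewrite mulrC /monI (perm_all _ (msuppMX _ _)) all_map.
    by apply/allP => v /cw.
  move/(prime_X hP) => [i [pi wi]].
  by rewrite (aw i pi) in wi.
have [ucov udeg] : ~~ cov e u /\ mdeg u = k.
  move: uf1 => /msplit_supp /andP [/= -> uf]; split => //.
  by move: hf; rewrite dhomogE => /allP /(_ _ uf) /eqP.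
have uc : forall a b, e a b -> (0 < u a)%N -> (0 < u b)%N -> False.
  move=> a b eab ua ub; move/negP: ucov; apply; apply/existsP; exists a.
  by apply/existsP; exists b; rewrite eab ua ub.
pose A := [set i | (0 < u i)%N].
have nb : forall i, P 'X_i -> i \in nbhd e A.
  move=> i /hC /(_ _ uf1) /existsP [a /existsP [b /and3P [eab ha hb]]].
  move: ha hb; rewrite !mnmDE !mnm1E inE.
  case: (eqVneq i a) => [ia|nia]; case: (eqVneq i b) => [ib|nib] /= ha hb.
  - by rewrite -ia -ib eirr in eab.
  - subst a; apply/existsP; exists b; rewrite inE esym eab andbT.
    by rewrite add0n in hb.
  - subst b; apply/existsP; exists a; rewrite inE eab andbT.
    by rewrite add0n in ha.
  - rewrite add0n in ha; rewrite add0n in hb; by case: (uc a b).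
exists A; apply/andP; split; last first.
  rewrite -udeg mdegE -sum1_card big_mkcond /=; apply: leq_sum => i _.
  by rewrite inE; case: (u i).
apply/andP; split.
  apply/forallP => i; apply/forallP => j; apply/implyP => /andP [].
  rewrite !inE => ui uj; apply/negP => eij; exact: (uc i j).
apply/forallP => i; apply/forallP => j; apply/implyP => eij.
have : cov e ((U_(i) + U_(j)) + u)%MM.
  apply/existsP; exists i; apply/existsP; exists j; rewrite eij !mnmDE !mnm1E !eqxx /=.
  lia.
move/hu => [l [pl]]; rewrite mnmDE !mnm1E.
case: (eqVneq i l) => [il|_]; first by rewrite nb // il.
case: (eqVneq j l) => [jl|_]; first by rewrite orbC nb // jl.
by [].
Qed.
End Lower.

Local Close Scope ring_scope.

Section VMin.
Variables (N : nat) (e : rel 'I_N).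
Hypothesis eirr : irreflexive e.
Hypothesis esym : forall i j, e i j = e j i.

Lemma vnum_of_min (K : fieldType) A0 : good e A0 ->
  (forall B, good e B -> #|A0| <= #|B|) -> @is_vnumber_graph K N e #|A0|.
Proof.
move=> g0 hmin; split; first exact: good_witness g0.
move=> j /(witness_good eirr esym) [B /andP [gB le]].
exact: leq_trans (hmin _ gB) le.
Qed.

Lemma good_exists : exists A, good e A.
Proof.
have i0 : indep e set0 by apply/forallP => i; apply/forallP => j; rewrite inE.
case: (@arg_maxnP _ set0 (indep e) (fun B => #|B|) i0) => A iA hA.
exists A; apply/andP; split => //.
apply/forallP => i; apply/forallP => j; apply/implyP => eij.
have key : forall v, v \notin A -> v \in nbhd e A.
  move=> v vA; rewrite inE; case: (boolP [exists a, (a \in A) && e a v]) => // /existsPn hv; exfalso.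
  have : indep e (v |: A).
    apply/forallP => a; apply/forallP => b; apply/implyP; rewrite !inE.
    case/andP => /orP [/eqP ->|aA] /orP [/eqP ->|bA].
    - by rewrite eirr.
    - by move: (hv b); rewrite bA /= esym.
    - by move: (hv a); rewrite aA.
    - by move: iA => /forallP /(_ a) /forallP /(_ b); rewrite aA bA.
  by move/hA; rewrite cardsU1 vA /=; lia.
case: (boolP (i \in A)) => iA'; last by rewrite key.
case: (boolP (j \in A)) => jA'; last by rewrite (key j) ?orbT.
by move: iA => /forallP /(_ i) /forallP /(_ j); rewrite iA' jA' eij.
Qed.

Lemma min_good_exists : exists A0, good e A0 /\ forall B, good e B -> #|A0| <= #|B|.
Proof.
have [A1 g1] := good_exists.
case: (@arg_minnP _ A1 (good e) (fun B => #|B|) g1) => A gA hA.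
by exists A.
Qed.
End VMin.

Section Gen.
Variables (N : nat) (e : rel 'I_N).
Hypothesis eirr : irreflexive e.
Hypothesis esym : forall i j, e i j = e j i.

Lemma goodP (A : {set 'I_N}) : good e A <->
  (forall i j, i \in A -> j \in A -> ~~ e i j) /\
  (forall i j, e i j -> (i \in nbhd e A) || (j \in nbhd e A)).
Proof.
split.
  case/andP => /forallP h1 /forallP h2; split.
    by move=> i j iA jA; move: (h1 i) => /forallP /(_ j); rewrite iA jA.
  by move=> i j eij; move: (h2 i) => /forallP /(_ j); rewrite eij.
case=> h1 h2; apply/andP; split.
  apply/forallP => i; apply/forallP => j; apply/implyP => /andP [] ; exact: h1.
by apply/forallP => i; apply/forallP => j; apply/implyP; exact: h2.
Qed.

Lemma nbhdP (A : {set 'I_N}) j : reflect (exists2 a, a \in A & e a j) (j \in nbhd e A).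
Proof.
rewrite inE; apply: (iffP existsP) => [[a /andP [h1 h2]]|[a h1 h2]]; exists a => //.
by rewrite h1.
Qed.

Lemma fix_good (B : {set 'I_N}) x (b : bool) :
  (forall i j, i \in B -> j \in B -> ~~ e i j) ->
  (forall i j, e i j -> [|| i \in nbhd e B, j \in nbhd e B | b && ((i == x) || (j == x))]) ->
  exists B', good e B' /\ #|B'| <= #|B| + b.
Proof.
move=> hind hcov.
case: b hcov => hcov; last first.
  exists B; rewrite addn0; split => //; apply/goodP; split => // i j /hcov.
  by rewrite orbF.
case: (boolP (x \in nbhd e B)) => xn.
  exists B; split; last by rewrite leq_addr.
  apply/goodP; split => // i j /hcov /or3P [->|->|/= /orP [] /eqP ->] //.
  1-3: by rewrite ?xn ?orbT.
exists (x |: B); split; last by rewrite cardsU1 addnC leq_add2l leq_b1.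
have sub : forall v, v \in nbhd e B -> v \in nbhd e (x |: B).
  by move=> v /nbhdP [a aB eav]; apply/nbhdP; exists a; rewrite // inE aB orbT.
apply/goodP; split.
  move=> i j; rewrite !inE => /orP [/eqP ->|iB] /orP [/eqP ->|jB].
  - by rewrite eirr.
  - apply/negP => exj; move/negP: xn; apply; apply/nbhdP; exists j => //.
    by rewrite esym.
  - apply/negP => exj; move/negP: xn; apply; apply/nbhdP; exists i => //.
  - exact: hind.
move=> i j eij; move: (hcov i j eij) => /or3P [/sub ->|/sub ->|/= /orP [] /eqP ix] //.
- by rewrite orbT.
- apply/orP; right; apply/nbhdP; exists i => //; by rewrite ix setU11.
- apply/orP; left; apply/nbhdP; exists j; [by rewrite ix setU11 | by rewrite esym].
Qed.

Lemma auto_good (s t : 'I_N -> 'I_N) (A : {set 'I_N}) :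
  cancel s t -> cancel t s -> (forall i j, e (s i) (s j) = e i j) ->
  good e A -> good e (s @: A) /\ #|s @: A| = #|A|.
Proof.
move=> st ts hs /goodP [h1 h2]; split; last by apply: card_imset; exact: can_inj st.
apply/goodP; split.
  by move=> _ _ /imsetP [i iA ->] /imsetP [j jA ->]; rewrite hs; apply: h1.
move=> i j; rewrite -(ts i) -(ts j) hs => /h2 /orP [] /nbhdP [a aA ea]; apply/orP;
  [left|right]; apply/nbhdP; exists (s a); rewrite ?hs //; exact: imset_f.
Qed.
End Gen.

Section Spec.
Variables (n m : nat).
Hypothesis hn : 3 <= n.
Hypothesis hm : 3 <= m.

Local Notation NH := (n + m - 1).
Local Notation k := (m - 2).
Local Notation eC := (cycle_rel n).
Local Notation eP := (path_rel k).
Local Notation eH := (cycle_path_rel n m).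

Lemma cyc_lt (i : 'I_n) : i < NH. Proof. have := ltn_ord i; lia. Qed.
Lemma pth_lt (t : 'I_k) : n + 1 + t < NH. Proof. have := ltn_ord t; lia. Qed.
Lemma z_lt : n < NH. Proof. lia. Qed.
Definition cyc (i : 'I_n) : 'I_NH := Ordinal (cyc_lt i).
Definition pth (t : 'I_k) : 'I_NH := Ordinal (pth_lt t).
Definition z : 'I_NH := Ordinal z_lt.

Lemma eH_cc i j : eH (cyc i) (cyc j) = eC i j.
Proof.
rewrite /cycle_path_rel /clique_sum_base /cycle_rel /= !ltn_ord /=.
have := ltn_ord i; have := ltn_ord j; lia.
Qed.

Lemma eH_pp s t : eH (pth s) (pth t) = eP s t.
Proof.
rewrite /cycle_path_rel /clique_sum_base /path_rel /=.
have := ltn_ord s; have := ltn_ord t; lia.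
Qed.

Lemma eH_cp i t : eH (cyc i) (pth t) = false.
Proof.
rewrite /cycle_path_rel /clique_sum_base /=.
have := ltn_ord i; have := ltn_ord t; lia.
Qed.

Lemma eH_pc i t : eH (pth t) (cyc i) = false.
Proof.
rewrite /cycle_path_rel /clique_sum_base /=.
have := ltn_ord i; have := ltn_ord t; lia.
Qed.

Lemma eH_zc i : eH z (cyc i) = (i == 0 :> nat).
Proof.
rewrite /cycle_path_rel /clique_sum_base /=.
have := ltn_ord i; lia.
Qed.

Lemma eH_cz i : eH (cyc i) z = (i == 0 :> nat).
Proof.
rewrite /cycle_path_rel /clique_sum_base /=.
have := ltn_ord i; lia.
Qed.

Lemma eH_zp t : eH z (pth t) = (t == 0 :> nat).
Proof.
rewrite /cycle_path_rel /clique_sum_base /=.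
have := ltn_ord t; lia.
Qed.

Lemma eH_pz t : eH (pth t) z = (t == 0 :> nat).
Proof.
rewrite /cycle_path_rel /clique_sum_base /=.
have := ltn_ord t; lia.
Qed.

Lemma eH_zz : eH z z = false.
Proof. rewrite /cycle_path_rel /clique_sum_base /=; lia. Qed.

Lemma mod_succ x : x < n -> x.+1 %% n = if x.+1 < n then x.+1 else 0.
Proof.
move=> xn; case: ltnP => h; first by rewrite modn_small.
have -> : x.+1 = n by lia.
by rewrite modnn.
Qed.

Lemma eH_irr : irreflexive eH.
Proof.
move=> x; rewrite /cycle_path_rel /clique_sum_base /=.
case: (ltnP x n) => h /=; last by lia.
rewrite (mod_succ h); case: ifP; lia.
Qed.

Lemma eH_sym x y : eH x y = eH y x.
Proof. by rewrite /cycle_path_rel orbC. Qed.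

Lemma eC_irr : irreflexive eC.
Proof.
move=> [x hx]; rewrite /cycle_rel /= (mod_succ hx); case: ifP; lia.
Qed.

Lemma eC_sym x y : eC x y = eC y x.
Proof. by rewrite /cycle_rel orbC. Qed.

Lemma eP_irr : irreflexive eP.
Proof. move=> x; rewrite /path_rel; lia. Qed.

Lemma eP_sym x y : eP x y = eP y x.
Proof. by rewrite /path_rel orbC. Qed.

Lemma classify (x : 'I_NH) :
  [\/ exists i, x = cyc i, x = z | exists t, x = pth t].
Proof.
have hx := ltn_ord x.
case: (ltngtP x n) => h.
- by apply: Or31; exists (Ordinal h); apply: val_inj.
- have ht : x - n - 1 < k by lia.
  apply: Or33; exists (Ordinal ht); apply: val_inj => /=; lia.
- by apply: Or32; apply: val_inj.
Qed.

Lemma cyc_inj : injective cyc.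
Proof. by move=> i j /(congr1 val) /= /val_inj. Qed.
Lemma pth_inj : injective pth.
Proof. move=> [i hi] [j hj] /(congr1 val) /= h; apply: val_inj => /=; lia. Qed.
Lemma cyc_pth i t : cyc i != pth t.
Proof. case: i => i hi; apply/eqP => /(congr1 val) /=; lia. Qed.
Lemma z_cyc i : z != cyc i.
Proof. case: i => i hi; apply/eqP => /(congr1 val) /=; lia. Qed.
Lemma z_pth t : z != pth t.
Proof. apply/eqP => /(congr1 val) /=; lia. Qed.


Lemma n_pos : 0 < n. Proof. lia. Qed.
Definition rot (c : nat) (i : 'I_n) : 'I_n := Ordinal (ltn_pmod (i + c) n_pos).

Lemma rotK a : a < n -> cancel (rot (n - a)) (rot a).
Proof.
move=> an i; apply: val_inj => /=.
rewrite modnDml -addnA subnK ?(ltnW an) // modnDr modn_small //.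
Qed.

Lemma rotK' a : a < n -> cancel (rot a) (rot (n - a)).
Proof.
move=> an i; apply: val_inj => /=.
rewrite modnDml -addnA subnKC ?(ltnW an) // modnDr modn_small //.
Qed.

Lemma eC_mod (i j : 'I_n) : eC i j = (j == i.+1 %[mod n]) || (i == j.+1 %[mod n]).
Proof. by rewrite /cycle_rel (modn_small (ltn_ord j)) (modn_small (ltn_ord i)). Qed.

Lemma rot_edge c i j : eC (rot c i) (rot c j) = eC i j.
Proof.
have h : forall x y, ((y + c) %% n == ((x + c) %% n).+1 %[mod n]) = (y == x.+1 %[mod n]).
  move=> x y; rewrite modn_mod.
  by rewrite -[((x + c) %% n).+1]addn1 modnDml addnAC eqn_modDr addn1.
by rewrite !eC_mod /= !h.
Qed.

Lemma rot_good (A : {set 'I_n}) a : a \in A -> good eC A ->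
  exists A', [/\ good eC A', #|A'| = #|A| & rot (n - a) a \in A'].
Proof.
move=> aA gA.
have [g' c'] := auto_good (rotK (ltn_ord a)) (rotK' (ltn_ord a)) (@rot_edge _) gA.
by exists (rot (n - a) @: A); split => //; apply: imset_f.
Qed.


Lemma c1lt : 1 < n. Proof. lia. Qed.
Definition c0 : 'I_n := Ordinal n_pos.
Definition c1 : 'I_n := Ordinal c1lt.

Lemma upper (A1 : {set 'I_n}) (A2 : {set 'I_k}) : good eC A1 -> good eP A2 ->
  exists A : {set 'I_NH}, good eH A /\ #|A| <= #|A1| + #|A2|.
Proof.
move=> g1 g2.
have e01 : eC c0 c1 by rewrite /cycle_rel /= (modn_small c1lt) eqxx.
have [a aA] : exists a, a \in A1.
  by case/goodP: g1 => _ /(_ _ _ e01) /orP [] /nbhdP [a aA _]; exists a.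
have [A1' [g1' c1' a0]] := rot_good aA g1.
have r0 : rot (n - a) a = c0.
  by apply: val_inj => /=; rewrite subnKC ?(ltnW (ltn_ord a)) // modnn.
rewrite r0 in a0.
exists (cyc @: A1' :|: pth @: A2); split; last first.
  rewrite cardsU -c1'; apply: leq_trans (leq_subr _ _) _.
  by rewrite !card_imset //; [exact: pth_inj | exact: cyc_inj].
apply/goodP; split.
  move=> x y; rewrite !inE => /orP [] /imsetP [i iA ->] /orP [] /imsetP [j jA ->].
  - by rewrite eH_cc; case/goodP: g1' => h _; exact: h.
  - by rewrite eH_cp.
  - by rewrite eH_pc.
  - by rewrite eH_pp; case/goodP: g2 => h _; exact: h.
have zn : z \in nbhd eH (cyc @: A1' :|: pth @: A2).
  apply/nbhdP; exists (cyc c0); first by rewrite inE imset_f.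
  by rewrite eH_cz.
move=> x y.
case: (classify x) => [[i ->]| -> _ | [s ->]]; try by rewrite zn.
  case: (classify y) => [[j ->]| -> _ | [t ->]]; try by rewrite zn orbT.
    rewrite eH_cc; case/goodP: g1' => _ h /h /orP [] /nbhdP [a' aA' ea]; apply/orP;
      [left|right]; apply/nbhdP; exists (cyc a'); by rewrite ?inE ?imset_f ?eH_cc.
  by rewrite eH_cp.
case: (classify y) => [[j ->]| -> _ | [t ->]]; try by rewrite zn orbT.
  by rewrite eH_pc.
rewrite eH_pp; case/goodP: g2 => _ h /h /orP [] /nbhdP [a' aA' ea]; apply/orP;
  [left|right]; apply/nbhdP; exists (pth a'); by rewrite ?inE ?imset_f ?orbT ?eH_pp.
Qed.


Lemma t0lt : 0 < k. Proof. lia. Qed.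
Definition t0 : 'I_k := Ordinal t0lt.

Lemma lower (A : {set 'I_NH}) : good eH A ->
  exists B1 B2, [/\ good eC B1, good eP B2 & #|B1| + #|B2| <= #|A| + 1].
Proof.
case/goodP => hind hcov.
pose B1 := [set i | cyc i \in A]; pose B2 := [set t | pth t \in A]; pose b := z \in A.
have card : #|B1| + #|B2| + b <= #|A|.
  pose U := cyc @: B1 :|: pth @: B2.
  have cU : #|U| = #|B1| + #|B2|.
    have -> : #|B1| + #|B2| = #|cyc @: B1| + #|pth @: B2|.
      by rewrite !card_imset //; [exact: pth_inj | exact: cyc_inj].
    rewrite /U cardsU.
    have -> : cyc @: B1 :&: pth @: B2 = set0.
      apply/setP => x; rewrite !inE; apply/negP => /andP [/imsetP [i _ ->] /imsetP [t _ h]].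
      by move: (cyc_pth i t); rewrite h eqxx.
    by rewrite cards0 subn0.
  have sU : U \subset A.
    apply/subsetP => x; rewrite inE => /orP [] /imsetP [y]; rewrite inE => ? -> //.
  have zU : z \notin U.
    rewrite inE; apply/norP; split; apply/negP => /imsetP [y _ h].
      by move: (z_cyc y); rewrite h eqxx.
    by move: (z_pth y); rewrite h eqxx.
  case bz: b.
    have : z |: U \subset A by rewrite subUset sub1set -/b bz.
    by move/subset_leq_card; rewrite cardsU1 cU zU /= addnC.
  by rewrite /= addn0 -cU subset_leq_card.
have nbc : forall i, cyc i \in nbhd eH A -> (i \in nbhd eC B1) || (b && (i == c0)).
  move=> i /nbhdP [x]; case: (classify x) => [[j ->]| -> | [t ->]] xA.
  - by rewrite eH_cc => ej; apply/orP; left; apply/nbhdP; exists j; rewrite ?inE.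
  - rewrite eH_zc => /eqP i0; apply/orP; right; rewrite /b xA /=; apply/eqP.
    by apply: val_inj.
  - by rewrite eH_pc.
have nbp : forall i, pth i \in nbhd eH A -> (i \in nbhd eP B2) || (b && (i == t0)).
  move=> i /nbhdP [x]; case: (classify x) => [[j ->]| -> | [t ->]] xA.
  - by rewrite eH_cp.
  - rewrite eH_zp => /eqP i0; apply/orP; right; rewrite /b xA /=; apply/eqP.
    by apply: val_inj.
  - by rewrite eH_pp => ej; apply/orP; left; apply/nbhdP; exists t; rewrite ?inE.
have [B1' [g1 c1']] : exists B', good eC B' /\ #|B'| <= #|B1| + b.
  apply: (fix_good eC_irr eC_sym (x := c0)).
    by move=> i j; rewrite !inE -eH_cc; apply: hind.
  move=> i j; rewrite -eH_cc => /hcov /orP [] /=.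
    by case/nbc/orP => [->|/andP [-> ->]] //; rewrite ?orbT.
  by case/nbc/orP => [->|/andP [-> ->]] //; rewrite ?orbT.
have [B2' [g2 c2']] : exists B', good eP B' /\ #|B'| <= #|B2| + b.
  apply: (fix_good eP_irr eP_sym (x := t0)).
    by move=> i j; rewrite !inE -eH_pp; apply: hind.
  move=> i j; rewrite -eH_pp => /hcov /orP [] /=.
    by case/nbp/orP => [->|/andP [-> ->]] //; rewrite ?orbT.
  by case/nbp/orP => [->|/andP [-> ->]] //; rewrite ?orbT.
exists B1', B2'; split => //.
have hb : b <= 1 := leq_b1 _.
clear nbc nbp. clearbody b B1 B2. lia.
Qed.

End Spec.

Unset Implicit Arguments.

Theorem proposition3p7 (K : fieldType) (n m : nat) :
  (3 <= n)%N -> (3 <= m)%N ->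
  exists vC vP vH : nat,
    @is_vnumber_graph K n (cycle_rel n) vC /\
    @is_vnumber_graph K (m - 2) (path_rel (m - 2)) vP /\
    @is_vnumber_graph K (n + m - 1) (cycle_path_rel n m) vH /\
    (vC + vP <= vH + 1)%N /\ (vH <= vC + vP)%N.
Proof.
move=> hn hm.
have iC := eC_irr hn hm; have iP := eP_irr hn hm; have iH := eH_irr hn hm.
have sC := @eC_sym n; have sP := @eP_sym m; have sH := @eH_sym n m.
have [C0 [gC mC]] := min_good_exists iC sC.
have [P0 [gP mP]] := min_good_exists iP sP.
have [H0 [gH mH]] := min_good_exists iH sH.
exists #|C0|, #|P0|, #|H0|; split; first exact: vnum_of_min.
split; first exact: vnum_of_min.
split; first exact: vnum_of_min.
split.
  have [B1 [B2 [g1 g2 c]]] := lower hn hm gH.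
  apply: leq_trans c; exact: leq_add (mC _ g1) (mP _ g2).
have [A [gA c]] := upper hn hm gC gP.
exact: leq_trans (mH _ gA) c.
Qed.
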